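(* Let $\Omega=\{\Omega_1,\dots,\Omega_N\}$ be the vertex set of a directed weighted graph with (not necessarily symmetric) weight function $d$, let $1\le n<N$, and let $r\in\{1,\dots,n\}$. Define, for $t\in\{1,\dots,n\}$, $f(t)=\max\big(MMJ(\Omega_r,\Omega_t~|~\Omega_{[1,n]}),\ d(\Omega_t,\Omega_{n+1})\big)$, and $\mathbb{X}=\{f(t): t\in\{1,\dots,n\}\}$. Then $MMJ(\Omega_r,\Omega_{n+1}~|~\Omega_{[1,n+1]})=\min(\mathbb{X})$.
   Context: $\Omega$ is a finite set of points indexed $\Omega_1,\dots,\Omega_N$, and $\Omega_{[1,n]}=\{\Omega_1,\dots,\Omega_n\}$. $d(x,y)\ge 0$ is the weight of the directed edge from $x$ to $y$ (possibly $d(x,y)\neq d(y,x)$). For a subset $S\subseteq\Omega$, a (directed) path from $i$ to $j$ in $S$ is a finite sequence of points of $S$ (at least two) starting at $i$ and ending at $j$, with no repeated points except that start and end may coincide when $i=j$. A jump of a path is $d(x,y)$ for consecutive points $x$ followed by $y$, and $max\_jump$ of a path is its largest jump. The Min-Max-Jump distance with context $S$ is $MMJ(i,j~|~S)=\min\{max\_jump(\epsilon): \epsilon \text{ a path from } i \text{ to } j \text{ in } S\}$ for $i,j\in S$, with $MMJ(i,i~|~S)=0$. *)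

(* Defs.v *)
From HB Require Import structures.
From mathcomp Require Import all_boot all_order all_algebra.
From mathcomp Require Import classical_sets reals.
Set Implicit Arguments. Unset Strict Implicit. Unset Printing Implicit Defensive.
Import Order.TTheory GRing.Theory Num.Theory.
Local Open Scope ring_scope.
Local Open Scope classical_set_scope.

(* The points Omega_1..Omega_N are represented by the indices 'I_N
   (Omega_k  <->  ordinal k-1).  d is the directed weight function. *)

Section MMJ.
Variables (R : realType) (N : nat) (d : 'I_N -> 'I_N -> R).

Definition is_path (S : pred 'I_N) (i j : 'I_N) (p : seq 'I_N) : Prop :=
  [/\ (2 <= size p)%N, head i p = i, last i p = j, all S p &
      (if i == j then uniq (behead p) else uniq p)].

Definition max_jump (p : seq 'I_N) : R :=
  \big[Num.max/0]_(e <- zip p (behead p)) d e.1 e.2.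

Definition MMJ (S : pred 'I_N) (i j : 'I_N) : R :=
  if i == j then 0
  else inf [set max_jump p | p in [set p | is_path S i j p]].

End MMJ.

Definition Omega_prefix (N k : nat) : pred 'I_N := fun i => (i < k)%N.

(* Main.v *)
Require Import Defs.
From HB Require Import structures.
From mathcomp Require Import all_boot all_order all_algebra.
From mathcomp Require Import classical_sets reals.
From mathcomp Require Import zify.
Import Order.TTheory GRing.Theory Num.Theory.
Local Open Scope ring_scope.

Section Aux.
Variables (R : realType) (N : nat) (d : 'I_N -> 'I_N -> R).
Hypothesis d_ge0 : forall x y, 0 <= d x y.

Lemma zip_pairmap (x : 'I_N) q : zip (x :: q) q = pairmap pair x q.
Proof. by elim: q x => [|y q IH] x //=; rewrite -IH. Qed.

Lemma bigmax_c (s : seq ('I_N * 'I_N)) c : 0 <= c ->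
  \big[Num.max/c]_(e <- s) d e.1 e.2 = Num.max (\big[Num.max/0]_(e <- s) d e.1 e.2) c.
Proof.
move=> c0; elim: s => [|a s IH]; first by rewrite !big_nil max_r.
by rewrite !big_cons IH maxA.
Qed.

Lemma mj_ge0 p : 0 <= max_jump d p.
Proof. by rewrite /max_jump; elim/big_ind: _ => // x y hx hy; rewrite le_max hx. Qed.

Lemma mj_rcons (x : 'I_N) q y :
  max_jump d (rcons (x :: q) y) = Num.max (max_jump d (x :: q)) (d (last x q) y).
Proof.
rewrite /max_jump rcons_cons /= !zip_pairmap -cats1 pairmap_cat big_cat_nested /=.
by rewrite big_cons big_nil /= max_l ?d_ge0 // bigmax_c.
Qed.

End Aux.

Theorem theorem6p1 (R : realType) (N : nat) (d : 'I_N -> 'I_N -> R)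
  (d_ge0 : forall x y, 0 <= d x y)
  (n : nat) (hn1 : (1 <= n)%N) (hnN : (n < N)%N)
  (r : 'I_N) (hr : (r < n)%N) :
  let f := fun t : 'I_N =>
    Num.max (MMJ d (Omega_prefix n) r t) (d t (@Ordinal N n hnN)) in
  MMJ d (Omega_prefix n.+1) r (@Ordinal N n hnN)
  = \big[Num.min/f r]_(t < N | (val t < n)%N) f t.
Proof.
move=> f; set z := Ordinal hnN.
have rz : (r == z) = false by apply/negbTE; rewrite -val_eqE /= neq_ltn hr.
have fr : f r = d r z by rewrite /f /MMJ eqxx max_r ?d_ge0.
have lbE : forall (S : pred 'I_N) i j,
    has_lbound [set max_jump d p | p in [set p | is_path S i j p]].
  by move=> S i j; exists 0 => _ [p _ <-]; apply: mj_ge0.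
rewrite {1}/MMJ rz.
set E := (X in inf X).
have pE : forall p, is_path (Omega_prefix n.+1) r z p -> inf E <= max_jump d p.
  by move=> p hp; apply: ge_inf (lbE _ _ _) _ _; exists p.
have rzE : E (d r z).
  exists [:: r; z]; last by rewrite /max_jump /= big_cons big_nil max_l ?d_ge0.
  split => //=.
    by rewrite /Omega_prefix /=; apply/and3P; split => //; lia.
  by rewrite rz /= inE rz.
apply/eqP; rewrite eq_le; apply/andP; split.
- apply: le_bigmin; first by rewrite fr; apply: ge_inf (lbE _ _ _) _ _.
  move=> t /= ht.
  have [<-|rt] := eqVneq r t; first by rewrite fr; apply: ge_inf (lbE _ _ _) _ _.
  rewrite /f /MMJ (negbTE rt).
  have [hle|hlt] := leP (inf E) (d t z); first by rewrite le_max hle orbT.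
  rewrite le_max; apply/orP; left; apply: lb_le_inf.
    exists (max_jump d [:: r; t]); exists [:: r; t] => //.
    split => //=.
      by rewrite /Omega_prefix /=; apply/and3P; split => //; lia.
    by rewrite (negbTE rt) /= inE rt.
  move=> _ [[|x q] [hs hh hl ha hu] <-]; first by [].
  move: hh hl ha hu => /= -> hl ha; rewrite (negbTE rt) => hu.
  have := pE (rcons (r :: q) z); rewrite mj_rcons // hl.
  move=> H; have Hp : is_path (Omega_prefix n.+1) r z (rcons (r :: q) z); last first.
    by move: (H Hp); rewrite le_max => /orP[//|]; rewrite leNgt hlt.
  split.
  + by rewrite size_rcons; move: hs => /=; lia.
  + by [].
  + by rewrite last_rcons.
  + apply/allP => u; rewrite mem_rcons in_cons => /orP[/eqP->|/(allP (ha : all (Omega_prefix n) (r :: q)))];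
      rewrite /Omega_prefix /= => *; lia.
  + rewrite rz rcons_uniq; apply/andP; split; last exact: hu.
    by apply/negP => /(allP (ha : all (Omega_prefix n) (r :: q))); rewrite /Omega_prefix /= ltnn.
- apply: lb_le_inf; first by exists (d r z).
  move=> _ [p [hs hh hl ha hu] <-].
  case/lastP: p hs hh hl ha hu => [|p' y] //.
  rewrite last_rcons => hs hh hl ha hu; subst y.
  case: p' hs hh ha hu => [|x q] //= hs hh ha hu.
  move: hh ha hu; rewrite rz => -> ha hu.
  rewrite mj_rcons //.
  set t := last r q.
  have ha' : all (Omega_prefix n.+1) (rcons (r :: q) z) := ha.
  have hu' : uniq (rcons (r :: q) z) := hu.
  have hall : all (Omega_prefix n) (r :: q).
    apply/allP => u uin.
    move: hu'; rewrite rcons_uniq => /andP[hz _].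
    have := allP ha' u; rewrite mem_rcons in_cons uin orbT => /(_ isT).
    rewrite /Omega_prefix ltnS leq_eqVlt => /orP[/eqP htn|//].
    have uz : u = z by apply: val_inj.
    by move: hz; rewrite -uz uin.
  have ht : (t < n)%N by have := allP hall t; rewrite /t mem_last => /(_ isT).
  apply: bigmin_inf ht _.
  have [rt|rt] := eqVneq r t.
    by rewrite -rt fr le_max lexx orbT.
  rewrite /f; apply: le_max2 => //.
  rewrite /MMJ (negbTE rt); apply: ge_inf (lbE _ _ _) _ _.
  exists (r :: q) => //; split => //.
  + by move: rt; rewrite /t; case Eq: q => [|a b] //=; rewrite eqxx.
  + by rewrite (negbTE rt); move: hu'; rewrite rcons_uniq => /andP[].
Qed.
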